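(* Let $V$ be a finite dimensional real vector space, and let $(V,\nu,\tau,\tau^* )$ and $(V,\mu,\tau',\tau'^{*})$ be PN spaces such that $\tau^*$ and $\tau'^{*}$ are Archimedean and $\nu_p\neq\varepsilon_\infty$, $\mu_p\neq\varepsilon_\infty$ for every $p\in V$. Then $\nu$ and $\mu$ are equivalent, i.e. for every sequence $(p_m)$ in $V$ and every $p\in V$, $p_m$ strongly converges to $p$ with respect to $\nu$ if and only if $p_m$ strongly converges to $p$ with respect to $\mu$.
   Context: $\Delta^{+}$ is the set of functions $F:[-\infty,+\infty]\to[0,1]$ that are left-continuous on $\mathbb{R}$, nondecreasing, with $F(0)=0$ and $F(+\infty)=1$, ordered pointwise. $\varepsilon_0$ is the d.f. equal to $0$ for $x\le0$ and $1$ for $x>0$; $\varepsilon_\infty$ is the d.f. equal to $0$ on all of $\mathbb{R}$. A triangle function is a map $\tau:\Delta^+\times\Delta^+\to\Delta^+$ that is associative, commutative, nondecreasing in each argument, with unit $\varepsilon_0$; it is Archimedean if its only idempotents are $\varepsilon_0$ and $\varepsilon_\infty$. A PN space is a quadruple $(V,\nu,\tau,\tau^* )$ with $V$ a real vector space, $\tau\le\tau^*$ continuous triangle functions, and $\nu:V\to\Delta^+$ such that for all $p,q\in V$: (N1) $\nu_p=\varepsilon_0$ iff $p=\theta$; (N2) $\nu_{-p}=\nu_p$; (N3) $\nu_{p+q}\ge\tau(\nu_p,\nu_q)$; (N4) $\nu_p\le\tau^*(\nu_{\lambda p},\nu_{(1-\lambda)p})$ for all $\lambda\in[0,1]$. A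 sequence $(p_m)$ strongly converges to $p$ w.r.t. $\nu$ if for every $\lambda>0$ there is $N$ with $\nu_{p_m-p}(\lambda)>1-\lambda$ for $m\ge N$. *)

(* Defs.v *)
From HB Require Import structures.
From mathcomp Require Import all_boot all_order all_algebra.
From mathcomp Require Import all_classical all_reals topology normedtype sequences.
Set Implicit Arguments. Unset Strict Implicit. Unset Printing Implicit Defensive.
Import Order.TTheory GRing.Theory Num.Theory.
Import numFieldNormedType.Exports.
Local Open Scope classical_set_scope.
Local Open Scope ring_scope.

(* Distance distribution functions.  An element F of Delta^+ is a function on
   [-oo,+oo]; since F(-oo) = 0 and F(+oo) = 1 are fixed, F is faithfully
   represented by its restriction to R. *)
Section PN.
Variable R : realType.

Definition dplus (F : R -> R) : Prop :=
  [/\ (forall x, 0 <= F x <= 1),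
      (forall x y, x <= y -> F x <= F y),
      F 0 = 0 &
      (forall x, F y @[y --> x^'-] --> F x)].

Definition eps0 : R -> R := fun x => if 0 < x then 1 else 0.
Definition epsinf : R -> R := fun _ => 0.

Definition dle (F G : R -> R) : Prop := forall x, F x <= G x.

Definition wconv (Fn : nat -> R -> R) (F : R -> R) : Prop :=
  forall x, {for x, continuous F} -> (Fn n x @[n --> \oo] --> F x).

Definition triangle_function (tau : (R -> R) -> (R -> R) -> (R -> R)) : Prop :=
  [/\ (forall F G, dplus F -> dplus G -> dplus (tau F G)),
      (forall F G H, dplus F -> dplus G -> dplus H ->
          tau F (tau G H) = tau (tau F G) H),
      (forall F G, dplus F -> dplus G -> tau F G = tau G F),
      (forall F G H, dplus F -> dplus G -> dplus H -> dle F G ->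
          dle (tau F H) (tau G H)) &
      (forall F, dplus F -> tau F eps0 = F)].

Definition continuous_tf (tau : (R -> R) -> (R -> R) -> (R -> R)) : Prop :=
  forall (Fn Gn : nat -> R -> R) F G,
    (forall n, dplus (Fn n)) -> (forall n, dplus (Gn n)) -> dplus F -> dplus G ->
    wconv Fn F -> wconv Gn G ->
    wconv (fun n => tau (Fn n) (Gn n)) (tau F G).

Definition archimedean_tf (tau : (R -> R) -> (R -> R) -> (R -> R)) : Prop :=
  forall F, dplus F -> tau F F = F -> F = eps0 \/ F = epsinf.

Definition PN_space (V : lmodType R) (nu : V -> R -> R)
    (tau taus : (R -> R) -> (R -> R) -> (R -> R)) : Prop :=
  [/\ triangle_function tau /\ continuous_tf tau,
      triangle_function taus /\ continuous_tf taus,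
      (forall F G, dplus F -> dplus G -> dle (tau F G) (taus F G)),
      (forall p, dplus (nu p)) &
      [/\ (forall p, nu p = eps0 <-> p = 0),
      (forall p, nu (- p) = nu p),
      (forall p q, dle (tau (nu p) (nu q)) (nu (p + q))) &
      (forall p (l : R), 0 <= l <= 1 ->
          dle (nu p) (taus (nu (l *: p)) (nu ((1 - l) *: p))))]].

Definition strong_conv (V : lmodType R) (nu : V -> R -> R)
    (pm : nat -> V) (p : V) : Prop :=
  forall l : R, 0 < l -> exists N : nat, forall m, (N <= m)%N ->
    nu (pm m - p) l > 1 - l.

End PN.

(* Main.v *)
Require Import Defs.
From HB Require Import structures.
From mathcomp Require Import all_boot all_order all_algebra.
From mathcomp Require Import all_classical all_reals topology normedtype sequences.
From mathcomp Require Import ring lra.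
Import Order.TTheory GRing.Theory Num.Theory.
Import numFieldNormedType.Exports.
Import VectorInternalTheory.
Set Implicit Arguments. Unset Strict Implicit. Unset Printing Implicit Defensive.
Local Open Scope classical_set_scope.
Local Open Scope ring_scope.


Section Basics.
Variable R : realType.
Implicit Types F G H : R -> R.
Local Notation E0 := (@eps0 R).

Lemma dp_ge0 {F x} : dplus F -> 0 <= F x.
Proof. by case=> /(_ x) /andP[]. Qed.
Lemma dp_le1 {F x} : dplus F -> F x <= 1.
Proof. by case=> /(_ x) /andP[]. Qed.
Lemma dp_mono {F x y} : dplus F -> x <= y -> F x <= F y.
Proof. by case=> _ /(_ x y). Qed.
Lemma dp_neg {F x} : dplus F -> x <= 0 -> F x = 0.
Proof.
move=> dF x0; apply/eqP; rewrite eq_le dp_ge0 // andbT.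
by case: (dF) => _ _ <- _; rewrite dp_mono.
Qed.

Lemma dp_eps0 : dplus (@eps0 R).
Proof.
split.
- by move=> x; rewrite /eps0; case: ifP => _; rewrite ?lexx ?ler01.
- move=> x y xy; rewrite /eps0; case: ifP => x0; case: ifP => y0 //.
    by move: y0; rewrite (lt_le_trans x0 xy).
- by rewrite /eps0 ltxx.
- move=> x; apply: cvg_near_cst.
  have [x0|x0] := ltP 0 x.
    by near=> y; rewrite /eps0 x0 ifT //; near: y; exact: nbhs_left_gt.
  near=> y; rewrite /eps0 ifF ?ifF //; first by apply/negbTE; rewrite -leNgt.
  apply/negbTE; rewrite -leNgt; apply: le_trans x0.
  by near: y; exact: nbhs_left_le.
Unshelve. all: by end_near.
Qed.

Lemma dle_eps0 {F} : dplus F -> dle F (@eps0 R).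
Proof.
move=> dF x; rewrite /eps0; case: ifP => x0; first exact: dp_le1.
by rewrite dp_neg // leNgt x0.
Qed.

Lemma tf_le_l tau F G : triangle_function tau -> dplus F -> dplus G ->
  dle (tau F G) F.
Proof.
case=> _ _ C M U dF dG x.
rewrite C //; have := M G E0 F dG dp_eps0 dF (dle_eps0 dG) x.
by rewrite (C E0 F) ?U //; exact: dp_eps0.
Qed.

Lemma tf_eps0 tau : triangle_function tau -> tau E0 E0 = @eps0 R.
Proof. by case=> _ _ _ _ U; rewrite U //; exact: dp_eps0. Qed.

Definition sc (Fs : nat -> R -> R) := forall l : R, 0 < l ->
  exists N : nat, forall m, (N <= m)%N -> 1 - l < Fs m l.

Lemma sc_le Fs Gs : (forall m, dle (Fs m) (Gs m)) -> sc Fs -> sc Gs.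
Proof.
move=> FG sF l l0; have [N HN] := sF l l0; exists N => m /HN.
by move=> h; apply: lt_le_trans h (FG m l).
Qed.

Lemma sc_sub Fs phi : (forall k, (k <= phi k)%N) -> sc Fs -> sc (Fs \o phi).
Proof.
move=> hphi sF l l0; have [N HN] := sF l l0; exists N => m Nm.
by apply: HN; apply: leq_trans Nm (hphi m).
Qed.

Lemma sc_wconv Fs : (forall m, dplus (Fs m)) -> sc Fs -> wconv Fs E0.
Proof.
move=> dF sF x _.
have [x0|x0] := ltP 0 x.
  rewrite /eps0 x0; apply/cvgrPdist_lt => e e0.
  have m0 : 0 < Order.min x e by rewrite lt_min x0 e0.
  have [N HN] := sF (Order.min x e) m0.
  exists N => // m /HN h /=.
  rewrite ger0_norm ?subr_ge0 ?(dp_le1 (dF m)) //.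
  have hm : Order.min x e <= x by rewrite ge_min lexx.
  have h1 := dp_mono (dF m) hm.
  have h2 : Order.min x e <= e by rewrite ge_min lexx orbT.
  lra.
rewrite /eps0 ifF; last by apply/negbTE; rewrite -leNgt.
apply: cvg_near_cst; exists 0%N => // m _; exact: dp_neg.
Qed.

Lemma wconv_sc Fs : wconv Fs E0 -> sc Fs.
Proof.
move=> wF l l0.
have ct : {for l, continuous (@eps0 R)}.
  apply: (@near_cst_continuous R R (1:R)); near=> y; rewrite /eps0 ifT //.
  near: y; exact: lt_nbhsr.
have := wF l ct; rewrite /eps0 l0 => /cvgrPdist_lt /(_ l l0) [N _ HN].
exists N => m /HN /= h.
have := ler_norm (1 - Fs m l); lra.
Unshelve. all: by end_near.
Qed.

Lemma sc_tau tau (Fs Gs : nat -> R -> R) : triangle_function tau ->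
  continuous_tf tau -> (forall m, dplus (Fs m)) -> (forall m, dplus (Gs m)) ->
  sc Fs -> sc Gs -> sc (fun m => tau (Fs m) (Gs m)).
Proof.
move=> tf ct dF dG sF sG; apply: wconv_sc; rewrite -(tf_eps0 tf).
apply: ct => //; try exact: dp_eps0; exact: sc_wconv.
Qed.

Lemma sc_cst F : (forall l, 0 < l -> 1 - l < F l) -> dplus F -> F = E0.
Proof.
move=> h dF; apply/funext => x; rewrite /eps0; case: ifP => x0; last first.
  by rewrite dp_neg // leNgt x0.
apply/eqP; rewrite eq_le dp_le1 //=; apply/ler_addgt0Pr => e e0.
rewrite -lerBlDr; have hm : Order.min x e <= x by rewrite ge_min lexx.
have m0 : 0 < Order.min x e by rewrite lt_min x0 e0.
apply: le_trans (dp_mono dF hm); apply/ltW; apply: le_lt_trans (h _ m0).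
by rewrite lerB // ge_min lexx orbT.
Qed.

End Basics.



Section ContPt.
Variable R : realType.
Variable K : R -> R.
Hypothesis Kmono : forall {x y}, x <= y -> K x <= K y.

Definition cstep (p : R * R) : R * R :=
  let a := p.1 in let b := p.2 in
  let u := a + (b - a) / 4 in let m := (a + b) / 2 in
  let w := b - (b - a) / 4 in
  if K m - K u <= K w - K m then (u, m) else (m, w).

Lemma cstep_spec {a b} : a < b ->
  let p := cstep (a, b) in
  [/\ a < p.1, p.1 < p.2, p.2 < b & 2 * (K p.2 - K p.1) <= K b - K a].
Proof.
move=> ab /=; rewrite /cstep /=.
set u := a + (b - a) / 4; set m := (a + b) / 2; set w := b - (b - a) / 4.
have au : a <= u by rewrite /u; lra.
have um : u <= m by rewrite /u /m; lra.
have mw : m <= w by rewrite /m /w; lra.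
have wb : w <= b by rewrite /w; lra.
have := Kmono au; have := Kmono um; have := Kmono mw; have := Kmono wb.
case: ifP => /= h; rewrite /u /m /w in h * => *; split; lra.
Qed.

Variables a0 b0 : R.
Hypothesis ab0 : a0 < b0.

Definition cseq k := iter k cstep (a0, b0).

Lemma cseq_spec k : (cseq k).1 < (cseq k).2 /\
  (K (cseq k).2 - K (cseq k).1) * k.+1%:R <= K b0 - K a0.
Proof.
elim: k => [|k [lt IH]]; first by rewrite /= mulr1; split => //.
rewrite /cseq iterS -/(cseq k).
case: (cseq k) lt IH => a b /= lt IH.
have [h1 h2 h3 h4] := cstep_spec lt.
split => //.
have ge0 : 0 <= K (cstep (a, b)).2 - K (cstep (a, b)).1.
  by rewrite subr_ge0 Kmono // ltW.
have hk : 0 <= k%:R :> R by [].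
rewrite -natr1 in IH *; rewrite -natr1.
nra.
Qed.

Lemma cseq_step k : (cseq k).1 < (cseq k.+1).1 /\ (cseq k.+1).2 < (cseq k).2.
Proof.
rewrite /cseq iterS -/(cseq k); have [lt _] := cseq_spec k.
case: (cseq k) lt => a b /= lt.
by have [h1 h2 h3 h4] := cstep_spec lt.
Qed.

Lemma cseq_ab i j : (cseq i).1 < (cseq j).2.
Proof.
have ha : {homo (fun k => (cseq k).1) : n m / (n <= m)%N >-> n <= m}.
  by apply/nondecreasing_seqP => n; apply/ltW; case: (cseq_step n).
have hb : {homo (fun k => - (cseq k).2) : n m / (n <= m)%N >-> n <= m}.
  by apply/nondecreasing_seqP => n; rewrite lerN2; apply/ltW; case: (cseq_step n).
have h1 := ha i (maxn i j) (leq_maxl _ _).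
have h2 := hb j (maxn i j) (leq_maxr _ _).
have [h3 _] := cseq_spec (maxn i j).
rewrite /= in h1 h2; lra.
Qed.

Lemma exists_cont_pt : exists z, a0 < z < b0 /\ {for z, continuous K}.
Proof.
pose E := [set (cseq k).1 | k in [set: nat]].
have E0 : E !=set0 by exists (cseq 0).1; exists 0%N.
have ubE : ubound E (cseq 0).2 by move=> _ [k _ <-]; apply/ltW/cseq_ab.
have hasE : has_sup E by split => //; exists (cseq 0).2.
set z := sup E.
have zl k : (cseq k).1 < z.
  have [h _] := cseq_step k; apply: lt_le_trans h _.
  by apply: sup_upper_bound => //; exists k.+1.
have zr k : z < (cseq k).2.
  have [_ h] := cseq_step k; apply: le_lt_trans h.
  by apply: ge_sup => // _ [i _ <-]; apply/ltW/cseq_ab.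
exists z; split; first by have := zl 0%N; have := zr 0%N; rewrite /=; lra.
apply/cvgrPdist_le => e e0.
have D0 : 0 <= K b0 - K a0 by rewrite subr_ge0 Kmono // ltW.
have := @archi_boundP _ ((K b0 - K a0) / e) (divr_ge0 D0 (ltW e0)).
set k := Num.Def.archi_bound _ => hk.
have [_ Hk] := cseq_spec k.
have hk' : K b0 - K a0 < e * k%:R by move: hk; rewrite ltr_pdivrMr // mulrC.
have hkS : k.+1%:R = k%:R + 1 :> R by rewrite -natr1.
have Dk : 0 <= K (cseq k).2 - K (cseq k).1 by rewrite subr_ge0 Kmono // ltW // (lt_trans (zl k) (zr k)).
near=> t.
have t1 : (cseq k).1 < t by near: t; apply: lt_nbhsr; exact: zl.
have t2 : t < (cseq k).2 by near: t; apply: lt_nbhsl; exact: zr.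
have := Kmono (ltW t1); have := Kmono (ltW t2).
have := Kmono (ltW (zl k)); have := Kmono (ltW (zr k)) => *.
rewrite ler_norml; apply/andP; split; nra.
Unshelve. all: by end_near.
Qed.

End ContPt.



Section PNfacts.
Variable R : realType.
Variables (V : lmodType R) (nu : V -> R -> R).
Variables (tau taus : (R -> R) -> (R -> R) -> (R -> R)).
Hypothesis PN : PN_space nu tau taus.
Local Notation E0 := (@eps0 R).

Lemma pn_tf : triangle_function tau. Proof. by case: PN => [[]]. Qed.
Lemma pn_ct : continuous_tf tau. Proof. by case: PN => [[]]. Qed.
Lemma pn_tfs : triangle_function taus. Proof. by case: PN => _ []. Qed.
Lemma pn_cts : continuous_tf taus. Proof. by case: PN => _ []. Qed.
Lemma pn_d p : dplus (nu p). Proof. by case: PN => _ _ _ h _; apply: h. Qed.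
Lemma pn_N1 p : nu p = E0 <-> p = 0. Proof. by case: PN => _ _ _ _ []. Qed.
Lemma pn_N2 p : nu (- p) = nu p. Proof. by case: PN => _ _ _ _ []. Qed.
Lemma pn_N3 p q : dle (tau (nu p) (nu q)) (nu (p + q)).
Proof. by case: PN => _ _ _ _ []. Qed.
Lemma pn_N4 p (l : R) : 0 <= l <= 1 ->
  dle (nu p) (taus (nu (l *: p)) (nu ((1 - l) *: p))).
Proof. by case: PN => _ _ _ _ [] _ _ _; apply. Qed.

Lemma nu_scale p (l : R) : `|l| <= 1 -> dle (nu p) (nu (l *: p)).
Proof.
wlog l0 : l / 0 <= l.
  move=> W; have [/W|l0] := leP 0 l; first exact.
  rewrite -(pn_N2 (l *: p)) -scaleNr => h; apply: W; rewrite ?normrN //; lra.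
move=> l1 x.
have l01 : 0 <= l <= 1 by rewrite l0 /=; rewrite ger0_norm in l1.
apply: le_trans (pn_N4 p l01 x) _.
exact: tf_le_l pn_tfs (pn_d _) (pn_d _) x.
Qed.

Lemma sc_add (xs ys : nat -> V) : sc (fun m => nu (xs m)) ->
  sc (fun m => nu (ys m)) -> sc (fun m => nu (xs m + ys m)).
Proof.
move=> sx sy; apply: (sc_le (fun m => pn_N3 (xs m) (ys m))).
by apply: sc_tau pn_tf pn_ct _ _ sx sy => m; exact: pn_d.
Qed.

Hypothesis Arch : archimedean_tf taus.
Hypothesis nz : forall p, nu p <> @epsinf R.

Section Small.
Variable q : V.
Let F n := nu ((2^-1 : R) ^+ n *: q).
Let dF n : dplus (F n). Proof. exact: pn_d. Qed.
Let Fstep n : dle (F n) (F n.+1).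
Proof.
rewrite /F exprS -scalerA; apply: nu_scale.
by rewrite ger0_norm ?invr_ge0 // invf_le1 // ler1n.
Qed.
Let Ftau n : dle (F n) (taus (F n.+1) (F n.+1)).
Proof.
have l01 : 0 <= (2^-1 : R) <= 1 by rewrite invr_ge0 ler0n /= invf_le1 // ler1n.
have h := pn_N4 ((2^-1 : R) ^+ n *: q) l01.
rewrite /F exprS -scalerA; have e : 1 - 2^-1 = 2^-1 :> R by field.
by rewrite e in h.
Qed.
Let Fmono m n x : (m <= n)%N -> F m x <= F n x.
Proof.
move=> mn; have : {homo (fun k => F k x) : i j / (i <= j)%N >-> i <= j}.
  by apply/nondecreasing_seqP => k; exact: Fstep.
by apply.
Qed.

Let S x := [set r : R | exists n y, y < x /\ r = F n y].
Let G x := sup (S x).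
Let S0 x : S x !=set0. Proof. by exists (F 0%N (x - 1)); exists 0%N, (x - 1); split => //; lra. Qed.
Let Sub x : ubound (S x) 1. Proof. by move=> _ [n [y [_ ->]]]; exact: dp_le1. Qed.
Let Ssup x : has_sup (S x). Proof. by split => //; exists 1; exact: Sub. Qed.
Let G_ge n x y : y < x -> F n y <= G x.
Proof. by move=> yx; apply: sup_upper_bound => //; exists n, y. Qed.
Let G_le x c : (forall n y, y < x -> F n y <= c) -> G x <= c.
Proof. by move=> h; apply: ge_sup => // _ [n [y [yx ->]]]; exact: h. Qed.
Let G_adh x e : 0 < e -> exists n y, y < x /\ G x - e < F n y.
Proof.
move=> e0; have [r [n [y [yx ->]]] h] := sup_adherent e0 (Ssup x).
by exists n, y.
Qed.
Let G_mono x y : x <= y -> G x <= G y.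
Proof. by move=> xy; apply: G_le => n z zx; apply: G_ge; exact: lt_le_trans zx xy. Qed.

Let dG : dplus G.
Proof.
split.
- move=> x; apply/andP; split; last by apply: G_le => n y _; exact: dp_le1.
  apply: le_trans (G_ge 0%N (_ : x - 1 < x)); [exact: dp_ge0 | lra].
- exact: G_mono.
- apply/eqP; rewrite eq_le; apply/andP; split.
    by apply: G_le => n y y0; rewrite dp_neg // ltW.
  apply: le_trans (G_ge 0%N (_ : -1 < 0)); [exact: dp_ge0 | lra].
- move=> x; apply/cvgrPdist_le => e e0.
  have [n [y [yx h]]] := G_adh x e0.
  near=> z.
  have yz : y < z by near: z; exact: nbhs_left_gt.
  have zx : z <= x by near: z; exact: nbhs_left_le.
  have := G_ge n yz; have := G_mono zx => *.
  rewrite ger0_norm ?subr_ge0 //; lra.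
Unshelve. all: by end_near.
Qed.

Let G_wconv (phi : nat -> nat) : (forall n, (n <= phi n)%N) ->
  wconv (fun n => F (phi n)) G.
Proof.
move=> hphi x cG; apply/cvgrPdist_le => e e0.
have [n0 [y [yx h]]] := G_adh x e0.
have := cG; move=> /cvgrPdist_le /(_ e e0) /nbhs_ballP [d /= d0 hd].
have hz := hd (x + d / 2) _.
have {hz} hz : `|G x - G (x + d / 2)| <= e.
  by apply: hz; rewrite /ball /= opprD addrA subrr add0r normrN ger0_norm; lra.
exists n0 => // n /= nn0.
have up : F (phi n) x <= G (x + d / 2) by apply: G_ge; lra.
have lo : F n0 y <= F (phi n) x.
  apply: le_trans (Fmono _ (leq_trans nn0 (hphi n))).
  by apply: dp_mono (dF _) (ltW yx).
move: hz; rewrite ler_norml => /andP[hz1 hz2].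
rewrite ler_norml; apply/andP; split; lra.
Qed.

Let K := taus G G.
Let dK : dplus K. Proof. by case: pn_tfs => h _ _ _ _; exact: h. Qed.

Let K_wconv : wconv (fun n => taus (F n.+1) (F n.+1)) K.
Proof.
have GW : wconv (fun n => F n.+1) G := @G_wconv (fun n => n.+1) (fun n => leqnSn n).
by apply: pn_cts => //.
Qed.

Let GK : G = K.
Proof.
apply/funext => x; apply/eqP; rewrite eq_le; apply/andP; split; last first.
  exact: tf_le_l pn_tfs dG dG x.
apply: G_le => n y yx.
have Kmono : forall a b, a <= b -> K a <= K b by move=> a b; exact: dp_mono dK.
have [z [/andP[yz zx] cz]] := exists_cont_pt Kmono yx.
apply: le_trans (dp_mono (dF n) (ltW yz)) _.
apply: le_trans (dp_mono dK (ltW zx)).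
rewrite leNgt; apply/negP => hlt.
have := K_wconv cz; move=> /cvgrPdist_lt /(_ (F n z - K z) ltac:(by rewrite subr_gt0)).
move=> [N _ HN].
have := HN (maxn n N) (leq_maxr _ _); rewrite /= ltr_norml => /andP[h1 h1'].
have h2 := Ftau (maxn n N) z.
have h3 := Fmono z (leq_maxl n N).
lra.
Qed.

Lemma small_mult l : 0 < l ->
  exists d : R, 0 < d /\ forall t, `|t| <= d -> 1 - l < nu (t *: q) l.
Proof.
move=> l0.
have GE : G = E0.
  have idem : taus G G = G by rewrite [RHS]GK.
  case: (Arch dG idem) => [//|hG].
  exfalso; suff : nu q = @epsinf R by apply: nz.
  apply/funext => y.
  have := G_ge 0%N (_ : y < y + 1); rewrite hG /epsinf /F expr0 scale1r.
  move=> /(_ ltac:(lra)) h; apply/eqP; rewrite eq_le h; exact: dp_ge0 (pn_d q).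
have [n [y [yl h]]] := G_adh l l0.
rewrite GE /eps0 l0 in h.
exists ((2^-1 : R) ^+ n); split; first by rewrite exprn_gt0 // invr_gt0.
move=> t tle.
have d0 : 0 < (2^-1 : R) ^+ n by rewrite exprn_gt0 // invr_gt0.
have -> : t *: q = (t / (2^-1) ^+ n) *: ((2^-1 : R) ^+ n *: q).
  by rewrite scalerA divfK // gt_eqF.
apply: lt_le_trans (nu_scale _ _ _); last first.
  by rewrite normrM normfV (gtr0_norm d0) ler_pdivrMr // mul1r.
apply: lt_le_trans h _; exact: dp_mono (dF n) (ltW yl).
Qed.

End Small.
End PNfacts.



Lemma row_coord_le (R : realType) n (r : 'rV[R]_n) i : `|r 0 i| <= `|r|.
Proof.
rewrite [leRHS]/Num.norm /= mx_normrE; apply/bigmax_geP; right => /=.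
by exists (ord0, i).
Qed.

Section FinDim.
Variable R : realType.
Variables (V : vectType R) (nu : V -> R -> R).
Variables (tau taus : (R -> R) -> (R -> R) -> (R -> R)).
Hypothesis PN : PN_space nu tau taus.
Hypothesis Arch : archimedean_tf taus.
Hypothesis nz : forall p, nu p <> @epsinf R.
Local Notation E0 := (@eps0 R).

Definition Nc (xs : nat -> V) := forall e : R, 0 < e ->
  exists N, forall m, (N <= m)%N -> `|v2r (xs m)| < e.

Lemma sc_sum (I : Type) (s : seq I) (f : nat -> I -> V) :
  (forall i, sc (fun m => nu (f m i))) ->
  sc (fun m => nu (\sum_(i <- s) f m i)).
Proof.
move=> hf; elim: s => [|i s IH].
  apply: (sc_le (Fs := fun _ => E0)) => [m|l l0]; first by rewrite big_nil (proj2 (pn_N1 PN 0)).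
  by exists 0%N => m _; rewrite /eps0 l0; lra.
have e : forall m, \sum_(j <- i :: s) f m j = f m i + \sum_(j <- s) f m j.
  by move=> m; rewrite big_cons.
apply: (sc_le (Fs := fun m => nu (f m i + \sum_(j <- s) f m j))) => [m x|].
  by rewrite e.
exact: (sc_add PN (xs := fun m => f m i) (ys := fun m => \sum_(j <- s) f m j) (hf i) IH).
Qed.

Lemma sc_scal (c : nat -> R) (b : V) :
  (forall e : R, 0 < e -> exists N, forall m, (N <= m)%N -> `|c m| < e) ->
  sc (fun m => nu (c m *: b)).
Proof.
move=> hc l l0; have [d [d0 hd]] := small_mult PN Arch nz b l0.
have [N HN] := hc d d0; exists N => m /HN h; apply: hd; exact: ltW.
Qed.

Lemma a_dir xs : Nc xs -> sc (fun m => nu (xs m)).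
Proof.
move=> hx.
have e m : xs m = \sum_(j < dim V) (v2r (xs m)) 0 j *: r2v 'e_j.
  by rewrite -{1}(v2rK (xs m)) {1}(row_sum_delta (v2r (xs m))) linear_sum;
     apply: eq_bigr => j _; rewrite linearZ.
apply: (sc_le (Fs := fun m => nu (\sum_(j < dim V) (v2r (xs m)) 0 j *: r2v 'e_j))).
  by move=> m x; rewrite -e.
apply: sc_sum => j; apply: sc_scal => eps eps0.
have [N HN] := hx eps eps0; exists N => m /HN h.
exact: le_lt_trans (row_coord_le _ _) h.
Qed.


Lemma b_dir xs : sc (fun m => nu (xs m)) -> Nc xs.
Proof.
move=> sx e e0.
have [//|hne] := pselect (exists N, forall m, (N <= m)%N -> `|v2r (xs m)| < e).
exfalso.
have h1 : forall N, exists m, (N <= m)%N /\ e <= `|v2r (xs m)|.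
  move=> N; have [//|hn] := pselect (exists m, (N <= m)%N /\ e <= `|v2r (xs m)|).
  exfalso; apply: hne; exists N => m Nm; rewrite ltNge; apply/negP => h.
  by apply: hn; exists m.
have [phi hphi] := choice h1.
pose nx k := `|v2r (xs (phi k))|.
have nx0 k : 0 < nx k by apply: lt_le_trans e0 (proj2 (hphi k)).
pose y k := (e / nx k) *: xs (phi k).
have ny k : `|v2r (y k)| = e.
  have ge0 : 0 <= e / nx k by rewrite divr_ge0 // ltW.
  rewrite /y linearZ /= normrZ ger0_norm //.
  by rewrite -/(nx k) divfK // gt_eqF.
have sy : sc (fun k => nu (y k)).
  apply: (sc_le (Fs := fun k => nu (xs (phi k)))) => [k|].
    rewrite /y; apply: (nu_scale PN (xs (phi k))).
    have ge0 : 0 <= e / nx k by rewrite divr_ge0 // ltW.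
    by rewrite ger0_norm // ler_pdivrMr // mul1r (proj2 (hphi k)).
  by apply: (sc_sub (Fs := fun m => nu (xs m))) sx => k; case: (hphi k).
pose S := [set r : 'rV[R]_(dim V) | `|r| = e].
have bS : bounded_set S.
  rewrite /= /bounded_near; near=> M => r /= ->; near: M.
  by apply: nbhs_pinfty_ge; rewrite num_real.
have cS : closed S.
  rewrite (_ : S = (@Num.norm _ 'rV[R]_(dim V)) @^-1` [set e]); last by [].
  apply: closed_comp; last exact: closed_eq.
  by move=> x _; exact: norm_continuous.
have FS : ((fun k => v2r (y k)) @ \oo) S by exists 0%N => // k _ /=; exact: ny.
have [w [Sw cw]] := bounded_closed_compact bS cS _ FS.
have h2 : forall j : nat, exists k, (j <= k)%N /\ `|w - v2r (y k)| < j.+1%:R^-1.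
  move=> j.
  have hA : ((fun k => v2r (y k)) @ \oo) [set v2r (y k) | k in [set k | (j <= k)%N]].
    by exists j => // k jk /=; exists k.
  have j0 : 0 < (j.+1%:R^-1 : R) by rewrite invr_gt0 ltr0n.
  have hB : nbhs w (ball w j.+1%:R^-1) := nbhsx_ballx w _ j0.
  have [r [[k /= jk <-] hb]] := cw _ _ hA hB.
  exists k; split => //. move: hb. by rewrite -ball_normE /ball_ /=.
have [psi hpsi] := choice h2.
pose z j := r2v w - y (psi j).
have nzc : Nc z.
  move=> eps eps0.
  have ei : 0 <= eps^-1 by rewrite invr_ge0 ltW.
  have := @archi_boundP _ eps^-1 ei.
  set N := Num.Def.archi_bound _ => hN.
  exists N => j Nj; rewrite /z linearB /= r2vK.
  apply: lt_le_trans (proj2 (hpsi j)) _.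
  rewrite -[leRHS]invrK lef_pV2 ?posrE ?invr_gt0 //.
  apply: le_trans (ltW hN) _; rewrite ler_nat; exact: leqW.
have sz := a_dir nzc.
have sy' : sc (fun j => nu (y (psi j))).
  by apply: (sc_sub (Fs := fun k => nu (y k))) sy => j; case: (hpsi j).
have := sc_add PN (xs := fun j => y (psi j)) (ys := z) sy' sz.
have ez j : y (psi j) + z j = r2v w by rewrite /z addrC subrK.
move=> sw.
have hw : nu (r2v w) = E0.
  apply: sc_cst (pn_d PN _) => l l0.
  have [N HN] := sw l l0; have := HN N (leqnn N); by rewrite ez.
move/(pn_N1 PN): hw => /(congr1 v2r); rewrite r2vK linear0 => w0.
by move: Sw; rewrite /S /= w0 normr0 => e00; move: e0; rewrite -e00 ltxx.
Unshelve. all: by end_near.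
Qed.

End FinDim.


Unset Implicit Arguments.
Local Close Scope classical_set_scope.

Theorem theorem20 (R : realType) (V : vectType R) (nu mu : V -> R -> R)
    (tau taus tau' taus' : (R -> R) -> (R -> R) -> (R -> R)) :
  PN_space nu tau taus -> PN_space mu tau' taus' ->
  archimedean_tf taus -> archimedean_tf taus' ->
  (forall p, nu p <> @epsinf R) -> (forall p, mu p <> @epsinf R) ->
  forall (pm : nat -> V) (p : V), strong_conv nu pm p <-> strong_conv mu pm p.
Proof.
move=> PN PM An Am nzn nzm pm p; split => h.
- exact: (a_dir PM Am nzm (b_dir PN An nzn h)).
- exact: (a_dir PN An nzn (b_dir PM Am nzm h)).
Qed.
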